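(* Let $m,n$ be natural numbers and let $F_{ij}=\int_{-1}^{1}P_{i-1}(\eta)\,\eta^{j-1}\,d\eta$. For each natural $k$ let $\mathbf f_{k,\bullet}=(F_{k1},\dots,F_{k,n+1})^T$, and let $\mathbf f'=(F_{1,m+1},F_{1,m+2},\dots,F_{1,m+n+1})^T$. Then \[ \mathbf f'=\sum_{i=1}^{m+1}\alpha_i\,\mathbf f_{i,\bullet},\qquad \alpha_i=\frac{2i-1}{2}F_{i,m+1}. \]
   Context: $P_k$ denotes the Legendre polynomial of degree $k$; $F$ is the matrix of moments of the Legendre polynomials. (Note $F_{i,m+1}=0$ whenever $i+m+1$ is odd, so only $i$ of the same parity as $m+1$ contribute.) *)

(* Defs.v *)
From Stdlib Require Import Reals.
From Coquelicot Require Import Coquelicot.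
Open Scope R_scope.

(* Legendre polynomials via Bonnet's recurrence:
   P_0 = 1, P_1 = x, (k+1) P_{k+1} = (2k+1) x P_k - k P_{k-1}.
   legendre_pair k x = (P_k x, P_{k+1} x). *)
Fixpoint legendre_pair (k : nat) (x : R) : R * R :=
  match k with
  | O => (1, x)
  | S k' =>
      let (p, q) := legendre_pair k' x in
      (q, ((2 * INR k' + 3) * x * q - (INR k' + 1) * p) / (INR k' + 2))
  end.

Definition legendreP (k : nat) (x : R) : R := fst (legendre_pair k x).

Definition F (i j : nat) : R :=
  RInt (fun eta => legendreP (i - 1) eta * eta ^ (j - 1)) (-1) 1.

(* Main.v *)
Require Import Defs.
From Stdlib Require Import Reals Lra Lia.
From Coquelicot Require Import Coquelicot.
Open Scope R_scope.

Lemma LP0 x : legendreP 0 x = 1. Proof. reflexivity. Qed.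
Lemma LP1 x : legendreP 1 x = x. Proof. reflexivity. Qed.
Lemma LPSS k x : legendreP (S (S k)) x =
  ((2 * INR k + 3) * x * legendreP (S k) x - (INR k + 1) * legendreP k x) / (INR k + 2).
Proof. unfold legendreP. simpl. destruct (legendre_pair k x) as [p q]. simpl. reflexivity. Qed.

Lemma cont_P k : forall x, continuous (legendreP k) x /\ continuous (legendreP (S k)) x.
Proof.
  induction k as [|k IH]; intro x.
  - split.
    + apply continuous_ext with (fun _ => 1). intros; reflexivity. apply continuous_const.
    + apply continuous_ext with (fun y => y). intros; reflexivity. apply continuous_id.
  - split. apply (IH x).
    apply continuous_ext with (fun y => mult (minus (mult (mult ((2 * INR k + 3)) y) (legendreP (S k) y)) (mult (INR k + 1) (legendreP k y))) (/ (INR k + 2))).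
    + intro y. rewrite LPSS. reflexivity.
    + apply (@continuous_mult R_UniformSpace R_AbsRing); [|apply continuous_const].
      apply (@continuous_minus R_UniformSpace R_AbsRing (AbsRing_NormedModule R_AbsRing)); apply (@continuous_mult R_UniformSpace R_AbsRing).
      * apply (@continuous_mult R_UniformSpace R_AbsRing). apply continuous_const. apply continuous_id.
      * apply (IH x).
      * apply continuous_const.
      * apply (IH x).
Qed.

Lemma cont_pow n x : continuous (fun y => y ^ n) x.
Proof.
  induction n. apply continuous_const.
  apply continuous_ext with (fun y => mult y (y ^ n)). intros; reflexivity.
  apply (@continuous_mult R_UniformSpace R_AbsRing). apply continuous_id. exact IHn.
Qed.

Definition M (k n : nat) : R := RInt (fun x => legendreP k x * x ^ n) (-1) 1.

Lemma exM k n : ex_RInt (fun x => legendreP k x * x ^ n) (-1) 1.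
Proof.
  apply (@ex_RInt_continuous R_CompleteNormedModule). intros z _.
  apply (continuous_mult (legendreP k) (fun y => y ^ n)). apply (cont_P k z). apply cont_pow.
Qed.

Lemma H0 n : M 1 n = M 0 (S n).
Proof. unfold M. apply RInt_ext. intros. rewrite LP0, LP1. simpl. ring. Qed.

Lemma H1 k n : (INR k + 2) * M (S (S k)) n =
  (2 * INR k + 3) * M (S k) (S n) - (INR k + 1) * M k n.
Proof.
  unfold M.
  assert (E: RInt (fun x => legendreP (S (S k)) x * x ^ n) (-1) 1 =
     RInt (fun x => scal (/ (INR k + 2)) (minus (scal (2 * INR k + 3) (legendreP (S k) x * x ^ S n))
                        (scal (INR k + 1) (legendreP k x * x ^ n)))) (-1) 1).
  { apply RInt_ext. intros. rewrite LPSS. unfold scal, minus, plus, opp; simpl.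
    unfold mult; simpl. field. pose proof (pos_INR k). lra. }
  rewrite E. rewrite (@RInt_scal R_CompleteNormedModule).
  2:{ apply (@ex_RInt_minus R_NormedModule); apply (@ex_RInt_scal R_NormedModule); apply exM. }
  rewrite (@RInt_minus R_CompleteNormedModule) by (apply (@ex_RInt_scal R_NormedModule); apply exM).
  rewrite !(@RInt_scal R_CompleteNormedModule) by apply exM.
  unfold scal, minus, plus, opp; simpl. unfold mult; simpl. field. pose proof (pos_INR k). lra.
Qed.

Lemma mu n : M 0 n = (1 - (-1) ^ (S n)) / INR (S n).
Proof.
  unfold M.
  rewrite (@RInt_ext R_CompleteNormedModule _ (fun x => x ^ n)).
  2:{ intros. rewrite LP0. simpl. ring. }
  apply is_RInt_unique.
  assert (Hn : INR (S n) <> 0) by (apply not_0_INR; lia).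
  assert (H := is_RInt_derive (fun x => x ^ S n / INR (S n)) (fun x => x ^ n) (-1) 1).
  replace ((1 - (-1) ^ S n) / INR (S n)) with (minus (1 ^ S n / INR (S n)) ((-1) ^ S n / INR (S n))).
  2:{ unfold minus, plus, opp; simpl. rewrite pow1. field. exact Hn. }
  apply H.
  - intros x _. 
    replace (x ^ n) with (INR (S n) * 1 * x ^ Nat.pred (S n) / INR (S n)).
    2:{ cbn [Nat.pred]. field. exact Hn. }
    auto_derive. trivial. cbn [Nat.pred]. rewrite <- S_INR. field. split; [exact Hn|destruct n; [lra|exact Hn]].
  - intros; apply cont_pow.
Qed.

Lemma M00 : M 0 0 = 2.
Proof. rewrite mu. simpl. field. Qed.
Lemma M01 : M 0 1 = 0.
Proof. rewrite mu. simpl. field. Qed.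
Lemma M0rec n : (INR n + 3) * M 0 (S (S n)) = (INR n + 1) * M 0 n.
Proof.
  rewrite !mu. rewrite !S_INR. simpl pow.
  assert (0 <= INR n) by apply pos_INR. field. lra.
Qed.

Lemma X k n : (2 * INR k + 1) * M k (S n) = (INR k + 1) * M (S k) n + INR k * M (pred k) n.
Proof.
  destruct k as [|k].
  - simpl. rewrite H0. ring.
  - simpl pred. pose proof (H1 k n) as E. rewrite S_INR. lra.
Qed.

Definition Sp k n := (INR n + INR k + 3) * M (S k) (S n) = (INR n + 1) * M k n.
Definition Lp k n := (INR n + 1) * M (S k) n = (INR n + 1 - INR k) * M k (S n).

Lemma SL k : (forall n, Sp k n) /\ (forall n, Lp k n).
Proof.
  induction k as [|k [IS IL]].
  - split; intro n; unfold Sp, Lp; simpl INR.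
    + rewrite H0. pose proof (M0rec n). lra.
    + rewrite H0. ring.
  - split; intro n; unfold Sp, Lp.
    + pose proof (H1 k (S n)) as E. pose proof (IS (S n)) as E2. pose proof (IL n) as E3.
      unfold Sp, Lp in *. rewrite !S_INR in *.
      assert (0 <= INR n) by apply pos_INR. assert (0 <= INR k) by apply pos_INR.
      apply Rmult_eq_reg_l with (INR k + 2); [|lra].
      transitivity ((INR n + INR k + 4) * ((INR k + 2) * M (S (S k)) (S n))). ring.
      rewrite E.
      transitivity ((2 * INR k + 3) * ((INR n + 1 + INR k + 3) * M (S k) (S (S n))) - (INR n + INR k + 4) * (INR k + 1) * M k (S n)). ring.
      rewrite E2.
      transitivity ((INR k + 2) * ((INR n + 1 - INR k) * M k (S n))). ring.
      rewrite <- E3. ring.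
    + pose proof (H1 k n) as E. pose proof (IS n) as E2.
      unfold Sp in *. rewrite !S_INR in *.
      assert (0 <= INR n) by apply pos_INR. assert (0 <= INR k) by apply pos_INR.
      apply Rmult_eq_reg_l with (INR k + 2); [|lra].
      transitivity ((INR n + 1) * ((INR k + 2) * M (S (S k)) n)). ring.
      rewrite E.
      transitivity ((INR n + 1) * (2 * INR k + 3) * M (S k) (S n) - (INR k + 1) * ((INR n + 1) * M k n)). ring.
      rewrite <- E2. ring.
Qed.

Lemma Z k : M (S k) 0 = 0 /\ M (S (S k)) 0 = 0.
Proof.
  induction k as [|k [IH0 IH]].
  - split. rewrite H0. exact M01.
    destruct (SL 1) as [_ IL]. pose proof (IL 0%nat) as E. unfold Lp in E. simpl INR in E.
    lra.
  - split. exact IH.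
    destruct (SL (S k)) as [IS _]. destruct (SL (S (S k))) as [_ IL].
    pose proof (IS 0%nat) as E1. pose proof (IL 0%nat) as E2. unfold Sp, Lp in *.
    change (INR 0) with 0 in E1, E2. rewrite IH0 in E1.
    assert (0 <= INR (S k)) by apply pos_INR.
    assert (M (S (S k)) 1 = 0).
    { apply Rmult_eq_reg_l with (0 + INR (S k) + 3); lra. }
    rewrite H2 in E2. lra.
Qed.

Lemma V n : forall k, (n < k)%nat -> M k n = 0.
Proof.
  induction n as [|n IH]; intros k Hk.
  - destruct k. lia. apply (Z k).
  - destruct k as [|k]. lia.
    destruct (SL k) as [IS _]. pose proof (IS n) as E. unfold Sp in E.
    rewrite (IH k) in E by lia.
    assert (0 <= INR n) by apply pos_INR. assert (0 <= INR k) by apply pos_INR.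
    apply Rmult_eq_reg_l with (INR n + INR k + 3); lra.
Qed.

Lemma sumS f N : sum_f_R0 f (S N) = sum_f_R0 f N + f (S N).
Proof. reflexivity. Qed.

Lemma tele m i N :
  sum_f_R0 (fun k => / 2 * M k m * ((INR k + 1) * M (S k) i + INR k * M (pred k) i)
                   - / 2 * M k i * ((INR k + 1) * M (S k) m + INR k * M (pred k) m)) N
  = / 2 * (INR N + 1) * (M N m * M (S N) i - M (S N) m * M N i).
Proof.
  induction N as [|N IH].
  - simpl. ring.
  - rewrite sumS, IH. cbv beta. change (pred (S N)) with N. rewrite S_INR. ring.
Qed.

Lemma sum_ext f g N : (forall k, (k <= N)%nat -> f k = g k) -> sum_f_R0 f N = sum_f_R0 g N.
Proof.
  induction N; intros H; simpl. apply H; lia.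
  rewrite IHN by (intros; apply H; lia). rewrite H by lia. reflexivity.
Qed.

Definition c k := (2 * INR k + 1) / 2.

Lemma T i : forall m N, (m <= N)%nat ->
  M 0 (m + i) = sum_f_R0 (fun k => c k * M k m * M k i) N.
Proof.
  induction i as [|i IH]; intros m N HmN.
  - rewrite Nat.add_0_r. destruct N as [|N].
    + simpl. unfold c. rewrite M00. simpl. field.
    + assert (E: sum_f_R0 (fun k => c k * M k m * M k 0) (S N) = c 0 * M 0 m * M 0 0).
      { clear HmN. induction N. simpl. rewrite (V 0 1) by lia. ring.
        rewrite sumS, IHN. rewrite (V 0 (S (S N))) by lia. ring. }
      rewrite E. unfold c. rewrite M00. simpl. field.
  - rewrite Nat.add_succ_r. rewrite <- Nat.add_succ_l.
    rewrite (IH (S m) (S N)) by lia.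
    transitivity (sum_f_R0 (fun k => c k * M k m * M k (S i)) (S N)).
    2:{ rewrite sumS. rewrite (V m (S N)) by lia. ring. }
    apply Rminus_diag_uniq_sym.
    rewrite <- minus_sum.
    transitivity (sum_f_R0 (fun k => / 2 * M k m * ((INR k + 1) * M (S k) i + INR k * M (pred k) i)
                   - / 2 * M k i * ((INR k + 1) * M (S k) m + INR k * M (pred k) m)) (S N)).
    2:{ rewrite tele. rewrite (V m (S N)) by lia. rewrite (V m (S (S N))) by lia. ring. }
    apply sum_ext. intros k _. unfold c.
    rewrite <- (X k i), <- (X k m). field.
Qed.

Theorem mainTheorem10 (m n : nat) :
  forall j : nat, (1 <= j <= n + 1)%nat ->
    F 1 (m + j) =
    sum_f_R0 (fun k => ((2 * INR (S k) - 1) / 2 * F (S k) (m + 1)) * F (S k) j) m.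
Proof.
  intros j Hj. destruct j as [|i]. lia.
  assert (EF : forall k j, F (S k) (S j) = M k j).
  { intros k j. unfold F, M. replace (S k - 1)%nat with k by lia.
    replace (S j - 1)%nat with j by lia. reflexivity. }
  replace (m + S i)%nat with (S (m + i)) by lia.
  replace (m + 1)%nat with (S m) by lia.
  rewrite EF. rewrite (T i m m) by lia.
  apply sum_ext. intros k _. rewrite !EF. unfold c. rewrite S_INR. field.
Qed.
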